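(* Let $\Sigma$ be a graded alphabet and $t\in T_\Sigma$. Then the sequential subtree automaton $\mathrm{seq}(A_t)$ is isomorphic to the quotient $(A_t)_{\sim_\mathrm{h}}$ of the subtree automaton $A_t$ by the relation $\sim_\mathrm{h}$.
   Context: A graded alphabet is a finite set $\Sigma=\bigcup_{k\in\mathbb{N}}\Sigma_k$; $T_\Sigma$ is the set of trees $f(t_1,\ldots,t_k)$ with $f\in\Sigma_k$. Weights are in $(\mathbb{N},+)$. A RWTA is $A=(\Sigma,Q,\nu,\delta)$ with $Q$ finite, $\nu:Q\to\mathbb{N}$, $\delta\subseteq\bigcup_k Q\times\Sigma_k\times Q^k$; $\delta(f,q_1,\ldots,q_k)=\{q\mid(q,f,q_1,\ldots,q_k)\in\delta\}$. A morphism from $A_1=(\Sigma,Q_1,\nu_1,\delta_1)$ to $A_2=(\Gamma,Q_2,\nu_2,\delta_2)$ is a map $\mu$ sending states of $A_1$ to states of $A_2$ and symbols of $\Sigma_k$ to symbols of $\Gamma_k$, such that $(\mu(q),\mu(f),\mu(q_1),\ldots,\mu(q_k))\in\delta_2$ whenever $(q,f,q_1,\ldots,q_k)\in\delta_1$, and $\nu_2(\mu(q))=\nu_1(q)$ for all $q\in Q_1$; it is an isomorphism if it has an inverse $\mu^{-1}$ which is a morphism from $A_2$ to $A_1$. For $t=f(t_1,\ldots,t_k)$, $\mathrm{SubTree}(t)=\{t\}\cup\bigcup_j\mathrm{SubTree}(t_j)$ and $\mathrm{SubTreeSeries}_t=t+\sum_j\mathrm{SubTreeSeries}_{t_j}$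 ($\mathrm{SubTreeSeries}_t(s)$ is the number of nodes of $t$ whose subtree equals $s$). The tree $t^\sharp$ is obtained from $t$ by indexing each symbol occurrence with its position in a preorder traversal (indexed symbols are distinct and keep their arity); $\Sigma_{t^\sharp}$ is the set of indexed symbols; $\mathrm{h}$ erases indices. The subtree automaton $A_t=(\Sigma,Q,\nu,\delta)$ has $Q=\mathrm{SubTree}(t^\sharp)$, $\nu\equiv1$, and for $f\in\Sigma_{t^\sharp}$ of arity $k$: $t_{k+1}\in\delta(\mathrm{h}(f),t_1,\ldots,t_k)$ iff $t_{k+1}=f(t_1,\ldots,t_k)$. The relation $\sim_\mathrm{h}$ on $Q$ is $r_1\sim_\mathrm{h}r_2\iff\mathrm{h}(r_1)=\mathrm{h}(r_2)$. The quotient of a RWTA $(\Sigma,Q,\nu,\delta)$ by an equivalence $\sim$ on $Q$ is $(\Sigma,Q_\sim,\nu',\delta')$ with $Q_\sim$ the set of classes, $\nu'(C)=\sum_{q\in C}\nu(q)$, and $C_{k+1}\in\delta'(f,C_1,\ldots,C_k)$ iff there are $q_i\in C_i$ with $q_{k+1}\in\delta(f,q_1,\ldots,q_k)$. The sequential subtree automaton is $\mathrm{seq}(A_t)=(\Sigma,\mathrm{SubTree}(t),\nu'',\delta'')$ with $\nu''(t')=\mathrm{SubTreeSeries}_t(t')$ and, for $f\in\Sigma_k$, $t_{k+1}\in\delta''(f,t_1,\ldots,t_k)$ iff $t_{k+1}=f(t_1,\ldots,t_k)$. *)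

(* Defs.v *)
From HB Require Import structures.
From mathcomp Require Import all_boot.
Set Implicit Arguments. Unset Strict Implicit. Unset Printing Implicit Defensive.

Inductive tree (S : Type) := Node of S & seq (tree S).
Arguments Node {S}.

Fixpoint tree_enc (S : Type) (t : tree S) : GenTree.tree S :=
  let: Node f ts := t in GenTree.Node 0 (GenTree.Leaf f :: map (@tree_enc S) ts).

Fixpoint tree_dec (S : Type) (g : GenTree.tree S) : option (tree S) :=
  match g with
  | GenTree.Node _ (GenTree.Leaf f :: gs) => Some (Node f (pmap (@tree_dec S) gs))
  | _ => None
  end.

Lemma tree_encK (S : Type) : pcancel (@tree_enc S) (@tree_dec S).
Proof.
rewrite /pcancel; fix IH 1; case=> f ts /=; congr (Some (Node f _)).
move: ts; fix IHl 1; case=> [|t ts] //=.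
by rewrite IH /= IHl.
Qed.

HB.instance Definition _ (S : countType) :=
  Countable.copy (tree S) (pcan_type (@tree_encK S)).

Fixpoint wf_tree (S : Type) (ar : S -> nat) (t : tree S) : bool :=
  let: Node f ts := t in (size ts == ar f) && all (@wf_tree S ar) ts.

(* SubTree(t), as a list (with multiplicity, one entry per node) *)
Fixpoint subtrees (S : Type) (t : tree S) : seq (tree S) :=
  let: Node f ts := t in t :: flatten (map (@subtrees S) ts).

Fixpoint SubTreeSeries (S : countType) (t : tree S) (s : tree S) : nat :=
  let: Node f ts := t in (t == s) + sumn (map (fun u => SubTreeSeries u s) ts).

(* t^sharp : index each symbol occurrence with its preorder position (root = 1) *)
Fixpoint sharp_aux (S : Type) (t : tree S) (n : nat) : tree (S * nat) * nat :=
  let: Node f ts := t in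
  let fix go (us : seq (tree S)) (m : nat) : seq (tree (S * nat)) * nat :=
    match us with
    | [::] => ([::], m)
    | u :: us' => let: (u', m1) := sharp_aux u m in
                  let: (us'', m2) := go us' m1 in (u' :: us'', m2)
    end in
  let: (ts', m) := go ts n.+1 in (Node (f, n) ts', m).

Definition sharp (S : Type) (t : tree S) : tree (S * nat) := (sharp_aux t 1).1.

Fixpoint erase (S : Type) (t : tree (S * nat)) : tree S :=
  let: Node g ts := t in Node g.1 (map (@erase S) ts).

(* A RWTA over the graded alphabet (Sig, ar): finite state set, weight nu,
   transition relation delta q f [q1;...;qk] meaning (q, f, q1, ..., qk) \in delta. *)
Record rwta (Sig : Type) (ar : Sig -> nat) := RWTA {
  state : finType;
  nu : state -> nat;
  delta : state -> Sig -> seq state -> Prop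
}.
Arguments RWTA {Sig ar}.
Arguments state {Sig ar}.
Arguments nu {Sig ar}.
Arguments delta {Sig ar}.

Definition is_morphism (Sig Gam : Type) (ar1 : Sig -> nat) (ar2 : Gam -> nat)
    (A1 : rwta ar1) (A2 : rwta ar2)
    (muQ : state A1 -> state A2) (muS : Sig -> Gam) : Prop :=
  [/\ (forall f, ar2 (muS f) = ar1 f),
      (forall q f qs, delta A1 q f qs -> delta A2 (muQ q) (muS f) (map muQ qs))
    & (forall q, nu A2 (muQ q) = nu A1 q)].

Arguments is_morphism {Sig Gam ar1 ar2}.

Definition isomorphic (Sig Gam : Type) (ar1 : Sig -> nat) (ar2 : Gam -> nat)
    (A1 : rwta ar1) (A2 : rwta ar2) : Prop :=
  exists (muQ : state A1 -> state A2) (muS : Sig -> Gam)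
         (muQ' : state A2 -> state A1) (muS' : Gam -> Sig),
    [/\ is_morphism A1 A2 muQ muS, is_morphism A2 A1 muQ' muS',
        cancel muQ muQ' /\ cancel muQ' muQ
      & cancel muS muS' /\ cancel muS' muS].

Definition eqclass (Q : finType) (r : rel Q) (q : Q) : {set Q} := [set q' | r q q'].

Definition is_class (Q : finType) (r : rel Q) : pred {set Q} :=
  fun C => [exists q, C == eqclass r q].

Definition classes_of (Q : finType) (r : rel Q) : finType := {C : {set Q} | is_class r C}.

Definition quotient (Sig : Type) (ar : Sig -> nat) (A : rwta ar) (r : rel (state A))
  : rwta ar :=
  @RWTA Sig ar (classes_of r)
    (fun C => \sum_(q in val C) nu A q)
    (fun C f Cs => exists (q : state A) (qs : seq (state A)),
        [/\ q \in val C, size qs = size Cs,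
            all2 (fun q' (C' : classes_of r) => q' \in val C') qs Cs
          & delta A q f qs]).

Definition SubTreeSt (S : countType) (t : tree S) : finType := seq_sub (subtrees t).

Definition subtree_automaton (Sig : finType) (ar : Sig -> nat) (t : tree Sig) : rwta ar :=
  @RWTA Sig ar (SubTreeSt (sharp t))
    (fun _ => 1)
    (fun q f qs => exists g : Sig * nat,
        [/\ g.1 = f, size qs = ar f & val q = Node g (map val qs)]).

Definition sim_h (Sig : finType) (ar : Sig -> nat) (t : tree Sig)
  : rel (state (subtree_automaton ar t)) :=
  fun r1 r2 => erase (val r1) == erase (val r2).

Definition seq_subtree_automaton (Sig : finType) (ar : Sig -> nat) (t : tree Sig)
  : rwta ar :=
  @RWTA Sig ar (SubTreeSt t)
    (fun t' => SubTreeSeries t (val t'))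
    (fun q f qs => size qs = ar f /\ val q = Node f (map val qs)).

Arguments isomorphic {Sig Gam ar1 ar2}.
Arguments quotient {Sig ar}.
Arguments subtree_automaton {Sig}.
Arguments sim_h {Sig}.
Arguments seq_subtree_automaton {Sig}.
Arguments wf_tree {S}.

(* Main.v *)
Require Import Defs.
From mathcomp Require Import all_boot.
From Stdlib Require List.
Set Implicit Arguments. Unset Strict Implicit.

Fixpoint go' (S : Type) (us : seq (tree S)) (m : nat) : seq (tree (S * nat)) * nat :=
    match us with
    | [::] => ([::], m)
    | u :: us' => let: (u', m1) := sharp_aux u m in
                  let: (us'', m2) := go' us' m1 in (u' :: us'', m2)
    end.
Lemma sharp_node (S : Type) f (ts : seq (tree S)) n :
  sharp_aux (Node f ts) n = let: (ts', m) := go' ts n.+1 in (Node (f, n) ts', m).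
Proof.
have E : forall us m, (fix go (us : seq (tree S)) (m : nat) : seq (tree (S * nat)) * nat :=
    match us with
    | [::] => ([::], m)
    | u :: us' => let: (u', m1) := sharp_aux u m in
                  let: (us'', m2) := go us' m1 in (u' :: us'', m2)
    end) us m = go' us m.
  elim=> //= u us IH m. by case: (sharp_aux u m) => a b; rewrite IH.
rewrite -E. reflexivity.
Qed.
Lemma tree_ind' (S : Type) (P : tree S -> Prop) :
  (forall f ts, (forall u, List.In u ts -> P u) -> P (Node f ts)) -> forall t, P t.
Proof.
move=> H; fix IH 1; case=> f ts; apply: H.
move: ts; fix IHl 1; case=> [|u us] v /=; first by case.
case=> [<-|Hv]; [exact: (IH u)| exact: (IHl us v Hv)].
Qed.

Lemma subtrees_erase (S : Type) (u : tree (S * nat)) :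
  map (@erase S) (subtrees u) = subtrees (erase u).
Proof.
elim/tree_ind': u => f ts IH /=; congr (_ :: _).
elim: ts IH => [|v vs IHl] IH //=.
rewrite map_cat (IH v) /=; last by left.
by rewrite IHl // => w Hw; apply: IH; right.
Qed.

Lemma subtrees_self (S : Type) (u : tree S) : subtrees u = u :: behead (subtrees u).
Proof. by case: u. Qed.

Lemma inIn (T : eqType) (x : T) s : x \in s -> List.In x s.
Proof. elim: s => //= y s IH; rewrite inE => /orP[/eqP->|/IH]; auto. Qed.

Lemma subtrees_trans (S : countType) (x y : tree S) :
  x \in subtrees y -> {subset subtrees x <= subtrees y}.
Proof.
elim/tree_ind': y => f ts IH /=; rewrite inE => /orP[/eqP->//|].
move=> /flattenP[l /mapP[u Hu ->] Hx] z Hz.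
rewrite inE; apply/orP; right; apply/flattenP; exists (subtrees u).
  by apply/mapP; exists u.
exact: (IH u (inIn Hu) Hx z Hz).
Qed.

Definition ridx (S : Type) (u : tree (S * nat)) : nat := let: Node g _ := u in g.2.

Lemma size_subtrees_node (S : Type) f (ts : seq (tree S)) :
  size (subtrees (Node f ts)) = (sumn (map (fun u => size (subtrees u)) ts)).+1.
Proof. by rewrite /= size_flatten /shape -map_comp. Qed.

Lemma sharp_spec (S : Type) (t : tree S) : forall n,
  [/\ (sharp_aux t n).2 = n + size (subtrees t), erase (sharp_aux t n).1 = t
    & map (@ridx S) (subtrees (sharp_aux t n).1) = iota n (size (subtrees t))].
Proof.
elim/tree_ind': t => f ts IH n.
have G : forall m, [/\ (go' ts m).2 = m + sumn (map (fun u => size (subtrees u)) ts),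
   map (@erase S) (go' ts m).1 = ts
 & map (@ridx S) (flatten (map (@subtrees _) (go' ts m).1))
     = iota m (sumn (map (fun u => size (subtrees u)) ts))].
  elim: ts IH => [|u us IHl] IH m /=; first by rewrite addn0.
  have [H1 H2 H3] := IH u (or_introl erefl) m.
  case E1: (sharp_aux u m) H1 H2 H3 => [u' m1] /= H1 H2 H3.
  have [G1 G2 G3] := IHl (fun w Hw => IH w (or_intror Hw)) m1.
  case E2: (go' us m1) G1 G2 G3 => [us'' m2] /= G1 G2 G3.
  split.
  - by rewrite G1 H1 addnA.
  - by rewrite H2 G2.
  - by rewrite map_cat H3 G3 H1 iotaD.
rewrite sharp_node size_subtrees_node.
have [G1 G2 G3] := G n.+1.
case E: (go' ts n.+1) G1 G2 G3 => [ts' m] /= G1 G2 G3.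
split.
- by rewrite G1 addSnnS.
- by rewrite G2.
- by rewrite G3.
Qed.

Lemma card_ss (T : countType) (s : seq T) (P : pred T) : uniq s ->
  #|[set q : seq_sub s | P (val q)]| = count P s.
Proof.
move=> Us. rewrite cardsE cardE /enum_mem size_filter.
have -> : count P s = count P (map val (seq_sub_enum s)) by rewrite val_seq_sub_enum.
rewrite count_map unlock /=. apply: eq_count => x. by [].
Qed.

Lemma self_mem (S : countType) (u : tree S) : u \in subtrees u.
Proof. by case: u => f ts; rewrite inE eqxx. Qed.

Lemma sharp_uniq (S : countType) (t : tree S) : uniq (subtrees (sharp t)).
Proof.
have [_ _ H] := sharp_spec t 1.
apply: (@map_uniq _ _ (@ridx S)). by rewrite /sharp H iota_uniq.
Qed.

Lemma sharp_erase (S : countType) (t : tree S) :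
  map (@erase S) (subtrees (sharp t)) = subtrees t.
Proof. have [_ H _] := sharp_spec t 1. by rewrite subtrees_erase /sharp H. Qed.

Lemma STS_count (S : countType) (t s : tree S) :
  SubTreeSeries t s = count (pred1 s) (subtrees t).
Proof.
elim/tree_ind': t => f ts IH /=; congr (_ + _).
rewrite count_flatten -map_comp; congr sumn; apply/eq_in_map => u Hu /=.
exact/IH/inIn.
Qed.

Lemma child_mem (S : countType) (R : tree S) g rs r :
  Node g rs \in subtrees R -> r \in rs -> r \in subtrees R.
Proof.
move=> H Hr; apply: (subtrees_trans H); rewrite inE; apply/orP; right.
apply/flattenP; exists (subtrees r); first by apply/mapP; exists r.
exact: self_mem.
Qed.

Lemma map_val_pmap (T : eqType) (l : seq T) (rs : seq T) :
  all (mem l) rs -> map val (pmap insub rs : seq (seq_sub l)) = rs.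
Proof.
elim: rs => //= r rs IH /andP[Hr Hrs].
by rewrite (insubT (mem l) Hr) /= IH.
Qed.

Section Main.
Variables (Sig : finType) (ar : Sig -> nat) (t : tree Sig).
Local Notation Q := (SubTreeSt (sharp t)).
Local Notation P := (SubTreeSt t).
Local Notation r := (sim_h ar t).

Definition cls (s : tree Sig) : {set Q} := [set q : Q | erase (val q) == s].

Lemma cls_is (q : P) : is_class r (cls (val q)).
Proof.
have : val q \in map (@erase _) (subtrees (sharp t)) by rewrite sharp_erase; exact: valP.
    case/mapP=> x Hx Ex.
apply/existsP; exists (SeqSub Hx); apply/eqP/setP => y.
by rewrite !inE /sim_h /= Ex eq_sym.
Qed.

Lemma erase_mem (q : Q) : erase (val q) \in subtrees t.
Proof. have H : erase (val q) \in map (@erase _) (subtrees (sharp t)) by apply: map_f; exact: valP.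
by rewrite sharp_erase in H. Qed.

Definition muQ (q : P) : classes_of r := exist _ (cls (val q)) (cls_is q).
Definition ersub (q : Q) : P := SeqSub (erase_mem q).
Definition q0 : Q := SeqSub (self_mem (sharp t)).
Definition muQ' (C : classes_of r) : P := ersub (odflt q0 [pick q in val C]).

Lemma classE (C : classes_of r) q : q \in val C -> val C = cls (erase (val q)).
Proof.
case: C => C0 /= /existsP[q' /eqP->]; rewrite inE /sim_h => /eqP E.
by apply/setP => y; rewrite !inE /sim_h E eq_sym.
Qed.

Lemma class_ne (C : classes_of r) : exists q, q \in val C.
Proof.
case: C => C0 /= /existsP[q' /eqP->]; exists q'; by rewrite inE /sim_h.
Qed.

Lemma muQ'E (C : classes_of r) q : q \in val C -> muQ' C = ersub q.
Proof.
move=> Hq; apply: val_inj; rewrite /muQ' /=.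
case: pickP => [p Hp|H] /=.
  by move: Hp; rewrite (classE Hq) inE => /eqP.
by have := H q; rewrite Hq.
Qed.

Lemma card_cls s : #|cls s| = SubTreeSeries t s.
Proof.
rewrite /cls (card_ss (fun x => erase x == s) (sharp_uniq t)) STS_count -sharp_erase.
by rewrite count_map.
Qed.

Lemma all2_muQ (a : seq Q) (b : seq P) :
  map (@erase _) (map val a) = map val b ->
  all2 (fun q' (C' : classes_of r) => q' \in val C') a (map muQ b).
Proof.
elim: a b => [|x a IH] [|y b] //= [E1 E2].
by rewrite IH // andbT inE E1.
Qed.

Lemma all2_muQ' (a : seq Q) (Cs : seq (classes_of r)) :
  all2 (fun q' (C' : classes_of r) => q' \in val C') a Cs ->
  map val (map muQ' Cs) = map (@erase _) (map val a).
Proof.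
elim: a Cs => [|x a IH] [|C Cs] //= /andP[H1 H2].
rewrite IH //; by have /(congr1 val) /= -> := muQ'E H1.
Qed.

End Main.

Theorem proposition7 (Sig : finType) (ar : Sig -> nat) (t : tree Sig) :
  wf_tree ar t ->
  isomorphic (seq_subtree_automaton ar t)
             (quotient (subtree_automaton ar t) (sim_h ar t)).
Proof.
move=> _.
exists (@muQ Sig ar t), id, (@muQ' Sig ar t), id; split.
- split => //.
  + move=> q f qs [Hs Hq] /=.
    have : val q \in map (@erase _) (subtrees (sharp t)) by rewrite sharp_erase; exact: valP.
    case/mapP=> x Hx Ex.
    case: x Hx Ex => g rs Hx /= Ex.
    rewrite Hq in Ex; case: Ex => Eg Ers.
    have Hall : all (mem (subtrees (sharp t))) rs.
      by apply/allP => y Hy; apply: (child_mem Hx Hy).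
    exists (SeqSub Hx), (pmap insub rs); split.
    * by rewrite inE /= Hq /= Ers Eg eqxx.
    * by rewrite size_map -(size_map val (pmap insub rs)) map_val_pmap // -(size_map (@erase _) rs) -Ers size_map.
    * by apply: all2_muQ; rewrite map_val_pmap // Ers.
    * exists g; split => //.
        by rewrite -Hs -(size_map val (pmap insub rs)) map_val_pmap // -(size_map (@erase _) rs) -Ers size_map.
      by rewrite /= map_val_pmap.
  + move=> q /=. by rewrite sum1_card card_cls.
- split => //.
  + move=> C f Cs [q [qs [Hq Hsz Hall [g [Eg Hs Hv]]]]]; split.
      by rewrite size_map -Hsz.
    by rewrite (muQ'E Hq) /= Hv /= Eg (all2_muQ' Hall).
  + move=> C; have [q Hq] := class_ne C.
    have -> : nu (seq_subtree_automaton ar t) (muQ' C) = SubTreeSeries t (erase (val q)).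
      by rewrite (muQ'E Hq).
    by rewrite /= sum1_card (classE Hq) card_cls.
- split.
  + move=> q; have [p Hp] := class_ne (muQ ar q).
    rewrite (muQ'E Hp); apply: val_inj => /=.
    by move: Hp; rewrite /= inE => /eqP.
  + move=> C; have [q Hq] := class_ne C; apply: val_inj.
    by rewrite (muQ'E Hq) (classE Hq).
- by split.
Qed.
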